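(* Let $r\ge 2$, $\pi\in\Pi_1(\{1,\dots,r\})$ and $c\in\mathcal{C}(\pi)$, and let $T=\psi_\pi(c)$ be the tree produced by the construction described in the context. Then $T\in\mathcal{E}(\pi)$ and $\kappa(T)=\omega(c,\pi)$.
   Context: Trees: an unordered increasing tree is a rooted tree on distinct positive integers, sons unordered, each son larger than its father. $\sigma_i(T)$ is the number of sons of $i$; $\kappa(T)=\prod_{i\in V(T)}x_i^{\sigma_i(T)}$ (with $x_i$ formal variables). $\Pi_1(\{1,\dots,r\})$ is the set of set partitions of $\{1,\dots,r\}$ having $\{1\}$ as a block; for such $\pi$ with $k$ blocks, index them $\pi_1,\dots,\pi_k$ so that $\mu_i=\max\pi_i$ satisfy $1=\mu_1<\mu_2<\dots<\mu_k=r$. $\mathcal{E}(\pi)$ is the set of unordered increasing trees on $\{1,\dots,r\}$ in which, for every two elements $i<j$ of the same block of $\pi$, $i$ is an ancestor of $j$. $\mathcal{C}(\pi)=\{(c_2,\dots,c_{k-1}):1\le c_i\le \mu_i\}$ (only the empty list if $k=2$), and $\omega(c,\pi)=\frac{x_{c_2}\cdots x_{c_{k-1}}}{x_{\mu_2}\cdots x_{\mu_k}}\prod_{i=1}^r x_i$. $v$-decomposition: for a vertex $v$ of an unordered increasing tree $T$ with chain $a_1<\dots<a_k=v$ from the root to $v$, removing the chain edges gives components $T^{(a_i)}$ rooted at $a_i$. Splice: for unordered increasing trees $T_1,T_2$ with disjoint vertex-sets and $v_1\in V(T_1)$, $v_2\in V(T_2)$, $v_1>v_2$, $\mathrm{spl}(T_1,v_1;T_2,v_2)$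 is the tree on $V(T_1)\cup V(T_2)$ obtained by merging the root-to-$v_1$ chain of $T_1$ and the root-to-$v_2$ chain of $T_2$ into one increasing chain (root = smallest element, ending at $v_1$) and attaching at each chain vertex its component from the $v_1$-decomposition of $T_1$ or the $v_2$-decomposition of $T_2$. Construction of $\psi_\pi(c)$: Stage 1: let $\tau_\ell$ be the increasing chain on the elements of $\pi_\ell$ ($\ell=1,\dots,k$), and set $\nu=1$. For $i=2,\dots,k-1$ (Stage $i$): if $c_i$ is a vertex of $\tau_1$ or $\tau_i$, replace $\tau_1$ by $\mathrm{spl}(\tau_i,\mu_i;\tau_1,\nu)$, discard $\tau_i$, and set $\nu=c_i$; otherwise $c_i$ is a vertex of $\tau_j$ for some $j>i$, and then replace $\tau_j$ by $\mathrm{spl}(\tau_i,\mu_i;\tau_j,c_i)$ and discard $\tau_i$. Finally (Stage $k$), $\psi_\pi(c)=\mathrm{spl}(\tau_k,\mu_k;\tau_1,\nu)$. (All splices are well defined.) *)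

(* Defs.v *)
From HB Require Import structures.
From mathcomp Require Import all_boot all_order all_algebra.
From mathcomp Require Import fraction.
From mathcomp Require Import mpoly.
Set Implicit Arguments. Unset Strict Implicit. Unset Printing Implicit Defensive.
Import Order.TTheory GRing.Theory Num.Theory.

(* Unordered increasing trees, encoded by (vertex list, parent map).   *)
(* Vertices are positive naturals; the root has parent 0 ("no parent"). *)
(* The parent map is only meaningful on the vertex list.               *)
Definition tree := (seq nat * (nat -> nat))%type.
Definition verts (T : tree) : seq nat := T.1.
Definition par (T : tree) : nat -> nat := T.2.

Definition root (T : tree) : nat := foldr minn (head 0 (verts T)) (verts T).

Definition is_inc_tree (T : tree) : Prop :=
  [/\ uniq (verts T), verts T != [::], all (fun v => 0 < v) (verts T) &
      forall v, v \in verts T ->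
        if v == root T then par T v = 0
        else (par T v \in verts T) /\ (par T v < v)].

Fixpoint anc_fuel (p : nat -> nat) (n v : nat) : seq nat :=
  if n is n'.+1 then (if v == 0 then [::] else v :: anc_fuel p n' (p v))
  else [::].
Definition chain (T : tree) (v : nat) : seq nat := anc_fuel (par T) v.+1 v.
Definition is_ancestor (T : tree) (i j : nat) : bool := i \in chain T j.

Definition sons (T : tree) (i : nat) : nat :=
  count (fun v => (v != root T) && (par T v == i)) (verts T).

Definition chain_tree (b : seq nat) : tree :=
  (b, fun u => \max_(w <- b | w < u) w).

(* splice spl(T1,v1;T2,v2): the two root-to-v chains are merged into a single
   increasing chain; every other vertex keeps its father (i.e. its component
   of the v-decomposition stays attached at the same chain vertex). *)
Definition spl (T1 : tree) (v1 : nat) (T2 : tree) (v2 : nat) : tree :=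
  let C := chain T1 v1 ++ chain T2 v2 in
  (verts T1 ++ verts T2,
   fun u => if u \in C then \max_(w <- C | w < u) w
            else if u \in verts T1 then par T1 u else par T2 u).

(* Set partitions of {1,...,r}, as partitions of the subset {1..r} of   *)
(* the finite type 'I_r.+1                                             *)
Definition posI (r : nat) : {set 'I_r.+1} := [set i : 'I_r.+1 | 0 < i].

Definition Pi1 (r : nat) (P : {set {set 'I_r.+1}}) : bool :=
  partition P (posI r) && ([set (inord 1 : 'I_r.+1)] \in P).

Definition bmax (r : nat) (B : {set 'I_r.+1}) : nat := \max_(x in B) (x : nat).
Definition mus (r : nat) (P : {set {set 'I_r.+1}}) : seq nat :=
  sort leq [seq bmax B | B <- enum P].
Definition nbl (r : nat) (P : {set {set 'I_r.+1}}) : nat := #|P|.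
Definition mu (r : nat) (P : {set {set 'I_r.+1}}) (i : nat) : nat :=
  nth 0 (mus P) i.-1.
Definition block (r : nat) (P : {set {set 'I_r.+1}}) (i : nat) : seq nat :=
  sort leq [seq nat_of_ord x | x <- enum (pblock P (inord (mu P i)))].

(* c = (c_2, ..., c_{k-1}) \in C(pi), stored as the list [c_2; ...; c_{k-1}] *)
Definition cc (c : seq nat) (i : nat) : nat := nth 0 c (i - 2).
Definition in_C (r : nat) (P : {set {set 'I_r.+1}}) (c : seq nat) : Prop :=
  size c = (nbl P - 2)%N /\
  forall i, 2 <= i <= (nbl P).-1 -> 1 <= cc c i <= mu P i.

Definition in_E (r : nat) (P : {set {set 'I_r.+1}}) (T : tree) : Prop :=
  [/\ is_inc_tree T,
      (forall x, (x \in verts T) = (1 <= x <= r)) &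
      forall B, B \in P -> forall x y : 'I_r.+1, x \in B -> y \in B ->
        (x < y)%N -> is_ancestor T x y].

(* State: the family of trees tau_l (l = 1..k), and nu.                 *)
Definition upd (F : nat -> tree) (j : nat) (t : tree) : nat -> tree :=
  fun l => if l == j then t else F l.

Definition stage (r : nat) (P : {set {set 'I_r.+1}}) (c : seq nat)
    (st : (nat -> tree) * nat) (i : nat) : (nat -> tree) * nat :=
  let (F, nu) := st in
  let ci := cc c i in
  if (ci \in verts (F 1%N)) || (ci \in verts (F i)) then
    (upd F 1 (spl (F i) (mu P i) (F 1%N) nu), ci)
  else
    let j := head 0 [seq j <- iota i.+1 (nbl P - i) | ci \in verts (F j)] in
    (upd F j (spl (F i) (mu P i) (F j) ci), nu).

Definition psi (r : nat) (P : {set {set 'I_r.+1}}) (c : seq nat) : tree :=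
  let st0 := ((fun l => chain_tree (block P l)), 1%N) in
  let st := foldl (stage P c) st0 (iota 2 (nbl P - 2)) in
  spl (st.1 (nbl P)) (mu P (nbl P)) (st.1 1%N) st.2.

(* kappa and omega, as elements of the field of rational functions      *)
(* Q(x_0, ..., x_r); x_i is the variable 'X_i                           *)
Definition ratf (r : nat) := {fraction {mpoly rat[r.+1]}}.
Definition xv (r : nat) (i : nat) : ratf r := @FracField.tofrac _ ('X_(inord i : 'I_r.+1)).

Definition kappa (r : nat) (T : tree) : ratf r :=
  (\prod_(i <- verts T) xv r i ^+ sons T i)%R.

Definition omega (r : nat) (P : {set {set 'I_r.+1}}) (c : seq nat) : ratf r :=
  ((\prod_(i <- c) xv r i) / (\prod_(m <- behead (mus P)) xv r m)
  * \prod_(1 <= i < r.+1) xv r i)%R.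

(* Main.v *)
Require Import Defs.
From HB Require Import structures.
From mathcomp Require Import all_boot all_order all_algebra.
From mathcomp Require Import fraction.
From mathcomp Require Import mpoly.
From mathcomp Require Import zify ring.
Set Implicit Arguments. Unset Strict Implicit. Unset Printing Implicit Defensive.
Import GRing.Theory.

Notation troot := Defs.root.


Lemma root_min (T : tree) v : v \in verts T -> troot T <= v.
Proof.
rewrite /troot; elim: (verts T) (head 0 (verts T)) => //= a s IH d.
rewrite in_cons => /orP [/eqP -> | H]; first by rewrite geq_minl.
by rewrite geq_min IH ?orbT.
Qed.

Lemma foldr_minn_in d s : foldr minn d s \in d :: s.
Proof.
elim: s => /= [|a s IH]; first by rewrite mem_head.
rewrite /minn; case: ifP => _; first by rewrite !inE eqxx orbT.
move: IH; rewrite !inE => /orP [->|->]; by rewrite ?orbT.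
Qed.

Lemma root_in (T : tree) : verts T != [::] -> troot T \in verts T.
Proof.
rewrite /troot; case: (verts T) => // a s _.
have := foldr_minn_in a (a :: s).
by rewrite inE => /orP [/eqP -> | ->] //; rewrite mem_head.
Qed.

Definition pm (Cs : seq nat) (u : nat) := \max_(w <- Cs | w < u) w.

Lemma pm_ge Cs u w : w \in Cs -> w < u -> w <= pm Cs u.
Proof. by move=> H1 H2; rewrite /pm (leq_bigmax_seq (F := fun w => w) (P := fun w => w < u) w H1 H2). Qed.

Lemma pm_cases Cs u : pm Cs u = 0 \/ (pm Cs u \in Cs /\ pm Cs u < u).
Proof.
rewrite /pm big_seq_cond.
apply: (big_ind (fun m => m = 0 \/ (m \in Cs /\ m < u))); first by left.
  move=> a b Ha Hb; rewrite /maxn; by case: ifP.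
by move=> w /andP [H1 H2]; right.
Qed.

Lemma pm_0 Cs u : (forall w, w \in Cs -> u <= w) -> pm Cs u = 0.
Proof.
move=> H; rewrite /pm big1_seq // => w /andP [H1 H2].
by have := H w H2; rewrite leqNgt H1.
Qed.

Lemma anc_fuel0 p n : anc_fuel p n 0 = [::].
Proof. by case: n. Qed.

Lemma chainlike (p : nat -> nat) Cs :
  all (fun w => 0 < w) Cs -> (forall u, u \in Cs -> p u = pm Cs u) ->
  forall n c, c \in Cs -> c < n ->
  forall x, (x \in anc_fuel p n c) = (x \in Cs) && (x <= c).
Proof.
move=> /allP Hpos Hp; elim=> // n IH c Hc Hcn x /=.
have c0 : c != 0 by rewrite -lt0n Hpos.
rewrite (negbTE c0) in_cons.
case: (pm_cases Cs c) => [H0 | [H1 H2]].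
  rewrite Hp // H0 anc_fuel0 orbF.
  apply/eqP/andP => [-> | [Hx Hxc]]; first by split.
  apply/eqP; rewrite eqn_leq Hxc /=; rewrite leqNgt; apply/negP => Hlt.
  by have := pm_ge Hx Hlt; rewrite H0 leqn0 => /eqP Hx0; move: (Hpos _ Hx); rewrite Hx0.
rewrite Hp // IH //; last by apply: leq_trans H2 _.
case: (eqVneq x c) => [-> | Hne] /=; first by rewrite Hc leqnn.
case Hx: (x \in Cs) => //=.
apply/idP/idP => [H | H]; first by apply: ltnW; apply: leq_ltn_trans H H2.
by apply: pm_ge => //; rewrite ltn_neqAle Hne H.
Qed.

Lemma chain_cons (T : tree) v : 0 < v -> chain T v = v :: behead (chain T v).
Proof. by rewrite /chain; case: v. Qed.

Section IncTree.
Variable T : tree.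
Hypothesis HT : is_inc_tree T.

Lemma inc_pos v : v \in verts T -> 0 < v.
Proof. by case: HT => _ _ /allP H _; apply: H. Qed.

Lemma inc_par v : v \in verts T -> v != troot T -> par T v \in verts T /\ par T v < v.
Proof. by case: HT => _ _ _ H Hv Hr; have := H v Hv; rewrite (negbTE Hr). Qed.

Lemma inc_par_root : par T (troot T) = 0.
Proof.
case: HT => _ Hne _ H; have := H _ (root_in Hne); by rewrite eqxx.
Qed.

Lemma inc_root_in : troot T \in verts T.
Proof. by case: HT => _ Hne _ _; apply: root_in. Qed.

Lemma fuel_eq n : forall m v, v \in verts T -> v < n -> v < m ->
  anc_fuel (par T) n v = anc_fuel (par T) m v.
Proof.
elim: n => // n IH [|m] // v Hv Hn Hm /=.
have v0 : v != 0 by rewrite -lt0n inc_pos.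
rewrite (negbTE v0); congr (_ :: _).
case: (eqVneq v (troot T)) => [-> | Hr]; first by rewrite inc_par_root !anc_fuel0.
have [H1 H2] := inc_par Hv Hr.
by apply: IH => //; apply: leq_trans H2 _.
Qed.

Lemma chain_unfold v : v \in verts T ->
  chain T v = v :: (if v == troot T then [::] else chain T (par T v)).
Proof.
move=> Hv; rewrite {1}/chain /=.
have v0 : v != 0 by rewrite -lt0n inc_pos.
rewrite (negbTE v0); congr (_ :: _).
case: (eqVneq v (troot T)) => [-> | Hr]; first by rewrite inc_par_root anc_fuel0.
have [H1 H2] := inc_par Hv Hr.
by rewrite /chain; apply: fuel_eq.
Qed.

Lemma strong_ind (Q : nat -> Prop) :
  (forall v, (forall w, w < v -> Q w) -> Q v) -> forall v, Q v.
Proof.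
move=> H v; elim: v.+1 {-2}v (ltnSn v) => // n IH w Hw.
apply: H => u Hu; apply: IH; apply: leq_trans Hu _; by rewrite -ltnS.
Qed.

Lemma chain_sub v x : v \in verts T -> x \in chain T v -> (x \in verts T) && (x <= v).
Proof.
elim/strong_ind: v => v IH Hv; rewrite chain_unfold // in_cons.
case/orP => [/eqP -> | ]; first by rewrite Hv leqnn.
case: ifP => // /negbT Hr Hx.
have [H1 H2] := inc_par Hv Hr.
case/andP: (IH _ H2 H1 Hx) => -> H /=; apply: leq_trans H (ltnW H2).
Qed.

Lemma chain_root v : v \in verts T -> troot T \in chain T v.
Proof.
elim/strong_ind: v => v IH Hv; rewrite chain_unfold // in_cons.
case: ifP => [/eqP -> | /negbT Hr]; first by rewrite eqxx.
have [H1 H2] := inc_par Hv Hr.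
by rewrite IH ?orbT.
Qed.

Lemma chain_trans v b a : v \in verts T -> b \in chain T v -> a \in chain T b -> a \in chain T v.
Proof.
elim/strong_ind: v b => v IH b Hv; rewrite [chain T v]chain_unfold // in_cons.
case/orP => [/eqP -> | ]; first by rewrite chain_unfold.
case: ifP => // /negbT Hr Hb Ha.
have [H1 H2] := inc_par Hv Hr.
by rewrite in_cons (IH _ H2 b H1 Hb Ha) orbT.
Qed.

Lemma chain_uniq v : v \in verts T -> uniq (chain T v).
Proof.
elim/strong_ind: v => v IH Hv; rewrite chain_unfold //.
case: ifP => [// | /negbT Hr].
have [H1 H2] := inc_par Hv Hr.
rewrite /= IH // andbT; apply/negP => Hin.
case/andP: (chain_sub H1 Hin) => _ H.
by move: (leq_trans H2 H); rewrite ltnn.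
Qed.

Lemma chain_prod (R : comRingType) (f : nat -> R) v : v \in verts T ->
  (\prod_(x <- chain T v | x != troot T) f (par T x) = \prod_(x <- behead (chain T v)) f x)%R.
Proof.
elim/strong_ind: v => v IH Hv; rewrite chain_unfold //.
case: ifP => [/eqP -> | /negbT Hr].
  by rewrite big_cons eqxx !big_nil.
have [H1 H2] := inc_par Hv Hr.
rewrite big_cons Hr /= IH // [in RHS]chain_unfold // big_cons.
by rewrite [in LHS]chain_unfold.
Qed.

End IncTree.

Lemma anc_pres (T S : tree) (Cs : seq nat) v :
  is_inc_tree T -> is_inc_tree S -> v \in verts T ->
  (forall u, u \in verts T -> u \in verts S) ->
  all (fun w => 0 < w) Cs ->
  (forall u, u \in Cs -> par S u = pm Cs u) ->
  (forall x, x \in verts T -> (x \in Cs) = (x \in chain T v)) ->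
  (forall u, u \in verts T -> u \notin Cs -> par S u = par T u) ->
  troot S \in Cs ->
  forall b a, b \in verts T -> a \in chain T b -> a \in chain S b.
Proof.
move=> HT HS Hv HVS Hpos HpC HCT Hpar HrS.
elim/strong_ind => b IH a Hb Ha.
case HbC: (b \in Cs).
  have Hbv : b \in chain T v by rewrite -HCT.
  have Hav := chain_trans HT Hv Hbv Ha.
  case/andP: (chain_sub HT Hb Ha) => HaT Hab.
  rewrite /chain (chainlike Hpos HpC) //.
  by rewrite Hab HCT // Hav.
have HrT : b != troot T.
  apply/negP => /eqP Hbr; move: HbC; rewrite HCT // Hbr chain_root //.
have HrS' : b != troot S by apply/negP => /eqP Hbr; move: HbC; rewrite Hbr HrS.
move: Ha; rewrite (chain_unfold HT Hb) (negbTE HrT) in_cons.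
rewrite (chain_unfold HS (HVS _ Hb)) (negbTE HrS') in_cons.
case/orP => [-> // | Ha]; apply/orP; right.
have [H1 H2] := inc_par HT Hb HrT.
by rewrite Hpar ?HbC //; apply: IH.
Qed.

Section Spl.
Variables (T1 T2 : tree) (v1 v2 : nat).
Hypotheses (HT1 : is_inc_tree T1) (HT2 : is_inc_tree T2)
  (Hv1 : v1 \in verts T1) (Hv2 : v2 \in verts T2) (Hlt : v2 < v1)
  (Hdis : forall x, x \in verts T1 -> x \notin verts T2).

Local Notation S := (spl T1 v1 T2 v2).
Local Notation C := (chain T1 v1 ++ chain T2 v2).

Lemma S_verts : verts S = verts T1 ++ verts T2.
Proof. by []. Qed.

Lemma C_in1 x : x \in chain T1 v1 -> x \in verts T1.
Proof. by move=> H; case/andP: (chain_sub HT1 Hv1 H). Qed.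
Lemma C_in2 x : x \in chain T2 v2 -> x \in verts T2.
Proof. by move=> H; case/andP: (chain_sub HT2 Hv2 H). Qed.

Lemma C_inS x : x \in C -> x \in verts S.
Proof.
rewrite S_verts !mem_cat => /orP [H|H].
  by rewrite (C_in1 H).
by rewrite (C_in2 H) orbT.
Qed.

Lemma C_le x : x \in C -> x <= v1.
Proof.
rewrite mem_cat => /orP [H|H].
  by case/andP: (chain_sub HT1 Hv1 H).
case/andP: (chain_sub HT2 Hv2 H) => _ H'; apply: leq_trans H' (ltnW Hlt).
Qed.

Lemma C_pos : all (fun w => 0 < w) C.
Proof.
apply/allP => x; rewrite mem_cat => /orP [H|H].
  by apply: (inc_pos HT1); apply: C_in1.
by apply: (inc_pos HT2); apply: C_in2.
Qed.

Lemma C_V1 x : x \in verts T1 -> (x \in C) = (x \in chain T1 v1).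
Proof.
move=> Hx; rewrite mem_cat; case H: (x \in chain T2 v2); last by rewrite orbF.
by have := Hdis Hx; rewrite (C_in2 H).
Qed.

Lemma C_V2 x : x \in verts T2 -> (x \in C) = (x \in chain T2 v2).
Proof.
move=> Hx; rewrite mem_cat; case H: (x \in chain T1 v1); last by [].
by have := Hdis (C_in1 H); rewrite Hx.
Qed.

Lemma parS_C u : u \in C -> par S u = pm C u.
Proof. by rewrite /par /= => ->. Qed.

Lemma parS_1 u : u \in verts T1 -> u \notin C -> par S u = par T1 u.
Proof. by rewrite /par /= => H1 /negbTE ->; rewrite H1. Qed.

Lemma parS_2 u : u \in verts T2 -> u \notin C -> par S u = par T2 u.
Proof.
rewrite /par /= => H2 /negbTE ->.
case H1: (u \in verts T1) => //; by have := Hdis H1; rewrite H2.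
Qed.

Lemma S_ne : verts S != [::].
Proof. by rewrite S_verts; case: HT1 => _; case: (verts T1). Qed.

Lemma rootS_C : troot S \in C.
Proof.
have := root_in S_ne; rewrite S_verts mem_cat => /orP [H|H].
  have E : troot S = troot T1.
    apply/eqP; rewrite eqn_leq root_min ?S_verts ?mem_cat ?inc_root_in //.
    by rewrite root_min.
  by rewrite E mem_cat chain_root.
have E : troot S = troot T2.
  apply/eqP; rewrite eqn_leq root_min ?S_verts ?mem_cat ?inc_root_in ?orbT //.
  by rewrite root_min.
by rewrite E mem_cat chain_root ?orbT.
Qed.

Lemma S_inc : is_inc_tree S.
Proof.
split.
- rewrite S_verts cat_uniq; case: HT1 => -> _ _ _; case: HT2 => -> _ _ _.
  rewrite andbT /=; apply/hasPn => x Hx; apply/negP => H; by have := Hdis H; rewrite Hx.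
- exact: S_ne.
- rewrite S_verts all_cat; case: HT1 => _ _ -> _; by case: HT2 => _ _ -> _.
move=> v Hv.
have HrC := rootS_C.
case HvC: (v \in C).
  rewrite parS_C //.
  case: ifP => [/eqP Hr | /negbT Hr].
    by apply: pm_0 => w Hw; rewrite Hr root_min // C_inS.
  have Hrv : troot S < v by rewrite ltn_neqAle eq_sym Hr root_min.
  case: (pm_cases C v) => [H0 | [Ha Hb]].
    have := pm_ge HrC Hrv; rewrite H0 leqn0 => /eqP H.
    by have := allP C_pos _ HrC; rewrite H.
  by rewrite C_inS.
have -> : (v == troot S) = false.
  by apply/negP => /eqP E; move: HvC; rewrite E HrC.
move: Hv; rewrite S_verts mem_cat => /orP [H|H].
  have Hr : v != troot T1.
    by apply/negP => /eqP E; move: HvC; rewrite C_V1 // E chain_root.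
  have [Ha Hb] := inc_par HT1 H Hr.
  by rewrite parS_1 ?HvC //; split => //; rewrite /verts /= mem_cat Ha.
have Hr : v != troot T2.
  by apply/negP => /eqP E; move: HvC; rewrite C_V2 // E chain_root.
have [Ha Hb] := inc_par HT2 H Hr.
by rewrite parS_2 ?HvC //; split => //; rewrite /verts /= mem_cat Ha orbT.
Qed.

Lemma chainS_C c x : c \in C -> (x \in chain S c) = (x \in C) && (x <= c).
Proof.
move=> Hc; rewrite /chain (chainlike C_pos parS_C) //.
Qed.

Lemma spl_anc1 b a : b \in verts T1 -> a \in chain T1 b -> a \in chain S b.
Proof.
apply: (anc_pres HT1 S_inc Hv1 _ C_pos parS_C C_V1 _ rootS_C).
  by move=> u Hu; rewrite mem_cat Hu.
by move=> u Hu HuC; rewrite parS_1.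
Qed.

Lemma spl_anc2 b a : b \in verts T2 -> a \in chain T2 b -> a \in chain S b.
Proof.
apply: (anc_pres HT2 S_inc Hv2 _ C_pos parS_C C_V2 _ rootS_C).
  by move=> u Hu; rewrite mem_cat Hu orbT.
by move=> u Hu HuC; rewrite parS_2.
Qed.

End Spl.

Definition pprod (R : comRingType) (f : nat -> R) (T : tree) :=
  (\prod_(v <- verts T | v != troot T) f (par T v))%R.

Lemma mem_behead_uniq (s : seq nat) a x : uniq (a :: s) -> (x \in s) = (x \in a :: s) && (x != a).
Proof.
move=> /= /andP [Ha _]; rewrite in_cons; case: (eqVneq x a) => [-> | Hx] /=.
  by rewrite (negbTE Ha).
by rewrite andbT.
Qed.

Lemma pprod_split (R : comRingType) (f : nat -> R) (T : tree) v (Cs : seq nat) :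
  is_inc_tree T -> v \in verts T ->
  (forall x, x \in verts T -> (x \in Cs) = (x \in chain T v)) ->
  pprod f T = (\prod_(x <- behead (chain T v)) f x *
               \prod_(u <- verts T | u \notin Cs) f (par T u))%R.
Proof.
move=> HT Hv HC; rewrite /pprod (bigID (fun u => u \in Cs)) /=.
have HrC : troot T \in Cs by rewrite HC ?inc_root_in // chain_root.
congr (_ * _)%R; last first.
  apply: eq_bigl => u; case: (eqVneq u (troot T)) => [-> | _] //=.
  by rewrite HrC.
rewrite (eq_bigl (fun u => (u \in Cs) && (u != troot T))); last by move=> u; rewrite andbC.
rewrite -big_filter_cond -(chain_prod HT f Hv).
apply: perm_big; apply: uniq_perm.
- by apply: filter_uniq; case: HT.
- by apply: chain_uniq.
move=> x; rewrite mem_filter.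
case Hx: (x \in verts T); last first.
  rewrite andbF; apply/esym/negP => H.
  by case/andP: (chain_sub HT Hv H); rewrite Hx.
by rewrite HC // andbT.
Qed.

Section SplProd.
Variables (T1 T2 : tree) (v1 v2 : nat).
Hypotheses (HT1 : is_inc_tree T1) (HT2 : is_inc_tree T2)
  (Hv1 : v1 \in verts T1) (Hv2 : v2 \in verts T2) (Hlt : v2 < v1)
  (Hdis : forall x, x \in verts T1 -> x \notin verts T2).

Local Notation S := (spl T1 v1 T2 v2).
Local Notation C := (chain T1 v1 ++ chain T2 v2).

Lemma spl_pprod (R : comRingType) (f : nat -> R) :
  pprod f S = (f v2 * pprod f T1 * pprod f T2)%R.
Proof.
have HS := S_inc HT1 HT2 Hv1 Hv2 Hdis.
have Hv1S : v1 \in verts S by rewrite /verts /= mem_cat Hv1.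
have HCS : forall x, (x \in C) = (x \in chain S v1).
  move=> x; rewrite (chainS_C HT1 HT2 Hv1 Hv2); last by rewrite mem_cat chain_unfold // mem_head.
  case H: (x \in C) => //=; by rewrite (C_le HT1 HT2 Hv1 Hv2 Hlt H).
rewrite (pprod_split f HS Hv1S (fun x _ => HCS x)).
rewrite (pprod_split f HT1 Hv1 (C_V1 v1 HT2 Hv2 Hdis)).
rewrite (pprod_split f HT2 Hv2 (C_V2 v2 HT1 Hv1 Hdis)).
have -> : (\prod_(u <- verts S | u \notin C) f (par S u) =
   \prod_(u <- verts T1 | u \notin C) f (par T1 u) *
   \prod_(u <- verts T2 | u \notin C) f (par T2 u))%R.
  rewrite [verts S]/verts /= big_cat /=; congr (_ * _)%R.
    rewrite big_seq_cond [RHS]big_seq_cond; apply: eq_bigr => u /andP [Hu HuC].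
    by rewrite (negbTE HuC) Hu.
  rewrite big_seq_cond [RHS]big_seq_cond; apply: eq_bigr => u /andP [Hu HuC].
  rewrite (negbTE HuC); case H1: (u \in verts T1) => //; by have := Hdis H1; rewrite Hu.
have -> : (\prod_(x <- behead (chain S v1)) f x =
   \prod_(x <- behead (chain T1 v1)) f x * \prod_(x <- chain T2 v2) f x)%R.
  rewrite -big_cat; apply: perm_big; apply: uniq_perm.
  - move: (chain_uniq HS Hv1S); case: (chain S v1) => [|a s] //=; by case/andP.
  - rewrite cat_uniq; move: (chain_uniq HT1 Hv1).
    case E: (chain T1 v1) => [|a s]; first by move: E; rewrite chain_unfold.
    rewrite /=; case/andP => _ Hs; rewrite Hs chain_uniq // andbT.
    apply/hasPn => x Hx; apply/negP => Hs2.
    have : x \in chain T1 v1 by rewrite E inE Hs2 orbT.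
    move/(C_in1 HT1 Hv1) /Hdis; by rewrite (C_in2 HT2 Hv2 Hx).
  move=> x.
  have E : chain S v1 = v1 :: behead (chain S v1) by rewrite chain_cons // (inc_pos HT1).
  rewrite (mem_behead_uniq x (_ : uniq (v1 :: behead (chain S v1)))); last by rewrite -E chain_uniq.
  rewrite -E -HCS.
  have E1 : chain T1 v1 = v1 :: behead (chain T1 v1) by rewrite chain_cons // (inc_pos HT1).
  rewrite !mem_cat [x \in behead _](mem_behead_uniq x (_ : uniq (v1 :: behead (chain T1 v1)))); last by rewrite -E1 chain_uniq.
  rewrite -E1 andb_orl.
  case H2: (x \in chain T2 v2); rewrite ?andFb ?andTb ?orbF //.
  case/andP: (chain_sub HT2 Hv2 H2) => _ Hx.
  have -> : x != v1 by apply/negP => /eqP Ex; move: (leq_ltn_trans Hx Hlt); rewrite Ex ltnn.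
  by rewrite orbT.
have E2 := chain_cons T2 (inc_pos HT2 Hv2).
rewrite [in (\prod_(x <- chain T2 v2) f x)%R]E2 big_cons.
set a := (\prod_(x <- behead (chain T1 v1)) f x)%R.
set b := (\prod_(x <- behead (chain T2 v2)) f x)%R.
set d := (\prod_(u <- verts T1 | _) _)%R.
set e := (\prod_(u <- verts T2 | _) _)%R.
ring.
Qed.
End SplProd.

Lemma sons_prod (R : comRingType) (f : nat -> R) (T : tree) : is_inc_tree T ->
  (\prod_(i <- verts T) f i ^+ sons T i)%R = pprod f T.
Proof.
move=> HT.
have E : forall i, (f i ^+ sons T i =
   \prod_(v <- verts T) (if (v != troot T) && (par T v == i) then f i else 1))%R.
  move=> i; rewrite -big_mkcond big_const_seq iter_mulr_1 //.
rewrite (eq_bigr _ (fun i _ => E i)) exchange_big /pprod [RHS]big_mkcond /=.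
apply: eq_big_seq => v Hv.
case: (eqVneq v (troot T)) => [-> | Hr] /=.
  by rewrite big1 // => i _; rewrite eqxx.
rewrite -big_mkcond /= -big_filter.
have [H1 _] := inc_par HT Hv Hr.
have -> : [seq i <- verts T | par T v == i] = [:: par T v].
  rewrite -(filter_pred1_uniq (s := verts T) _ H1); last by case: HT.
  by apply: eq_filter => i; rewrite /= eq_sym.
by rewrite big_seq1.
Qed.

Lemma kappa_pprod r (T : tree) : is_inc_tree T -> kappa r T = pprod (xv r) T.
Proof. by move=> HT; rewrite /kappa sons_prod. Qed.

Section ChainTree.
Variable b : seq nat.
Hypotheses (Hu : uniq b) (Hne : b != [::]) (Hpos : all (fun w => 0 < w) b).

Lemma ct_chain y x : y \in b -> (x \in chain (chain_tree b) y) = (x \in b) && (x <= y).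
Proof. by move=> Hy; rewrite /chain (chainlike (Cs := b) Hpos). Qed.

Lemma ct_inc : is_inc_tree (chain_tree b).
Proof.
split => //.
move=> v Hv.
have Hr := root_in (T := chain_tree b) Hne.
case: ifP => [/eqP E | /negbT E].
  rewrite /par /=; apply: pm_0 => w Hw; rewrite E; exact: (root_min (T := chain_tree b)).
have Hrv : troot (chain_tree b) < v by rewrite ltn_neqAle eq_sym E (root_min (T := chain_tree b)).
rewrite /par /=.
case: (pm_cases b v) => [H0 | [Ha Hb]] //.
have := pm_ge Hr Hrv; rewrite H0 leqn0 => /eqP H.
by have := allP Hpos _ Hr; rewrite H.
Qed.

Lemma ct_pprod (R : comRingType) (f : nat -> R) m :
  m \in b -> (forall x, x \in b -> x <= m) ->
  (f m * pprod f (chain_tree b) = \prod_(x <- b) f x)%R.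
Proof.
move=> Hm Hle.
have HC : forall x, x \in verts (chain_tree b) -> (x \in b) = (x \in chain (chain_tree b) m).
  by move=> x Hx; rewrite ct_chain // Hle // andbT.
rewrite (pprod_split f ct_inc Hm HC).
rewrite [X in (_ * (_ * X))%R]big1_seq ?mulr1; last by move=> u /andP [/negP].
have -> : (f m * \prod_(x <- behead (chain (chain_tree b) m)) f x = \prod_(x <- chain (chain_tree b) m) f x)%R.
  by rewrite [in RHS](chain_cons _ (allP Hpos _ Hm)) big_cons.
apply: perm_big; apply: uniq_perm => //; first exact: (chain_uniq ct_inc).
by move=> x; rewrite ct_chain //; case Hx: (x \in b) => //=; rewrite Hle.
Qed.
End ChainTree.


Section Part.
Variables (r : nat) (P : {set {set 'I_r.+1}}).
Hypotheses (Hr : 2 <= r) (HP : Pi1 P).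

Local Notation k := (nbl P).

Lemma HPcov : cover P = posI r.
Proof. by case/andP: HP => /cover_partition. Qed.
Lemma HPtriv : trivIset P.
Proof. by case/andP: HP => /and3P []. Qed.
Lemma HP0 : set0 \notin P.
Proof. by case/andP: HP => /and3P []. Qed.
Lemma HP1 : [set (inord 1 : 'I_r.+1)] \in P.
Proof. by case/andP: HP. Qed.

Lemma in_cov B x : B \in P -> x \in B -> x \in cover P.
Proof. by move=> HB Hx; apply/bigcupP; exists B. Qed.

Lemma in_pos (B : {set 'I_r.+1}) (x : 'I_r.+1) : B \in P -> x \in B -> 0 < x.
Proof. by move=> HB Hx; have := in_cov HB Hx; rewrite HPcov inE. Qed.

Lemma bmax_in B : B \in P -> exists2 x, x \in B & (x : nat) = bmax B.
Proof.
move=> HB.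
have : 0 < #|B|.
  rewrite card_gt0; apply/negP => /eqP E; by move: HP0; rewrite -E HB.
move=> /(eq_bigmax_cond (fun x : 'I_r.+1 => (x : nat))) [x Hx E].
by exists x; rewrite // /bmax E.
Qed.

Lemma le_bmax (B : {set 'I_r.+1}) (x : 'I_r.+1) : x \in B -> x <= bmax B.
Proof. by move=> Hx; apply: (leq_bigmax_cond (F := fun x : 'I_r.+1 => (x : nat))). Qed.

Lemma bmax_r B : B \in P -> bmax B <= r.
Proof. by move=> /bmax_in [x _ <-]; rewrite -ltnS. Qed.

Lemma bmax_pos B : B \in P -> 0 < bmax B.
Proof. by move=> HB; case: (bmax_in HB) => x Hx <-; apply: in_pos Hx. Qed.

Lemma pblock_bmax B : B \in P -> pblock P (inord (bmax B)) = B.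
Proof.
move=> HB; case: (bmax_in HB) => x Hx <-.
by rewrite inord_val; apply: def_pblock => //; apply: HPtriv.
Qed.

Lemma bmax_inj B1 B2 : B1 \in P -> B2 \in P -> bmax B1 = bmax B2 -> B1 = B2.
Proof. by move=> H1 H2 E; rewrite -(pblock_bmax H1) -(pblock_bmax H2) E. Qed.

Lemma mem_mus n : (n \in mus P) = (n \in [seq bmax B | B <- enum P]).
Proof. by rewrite mem_sort. Qed.

Lemma mus_uniq : uniq (mus P).
Proof.
rewrite sort_uniq map_inj_in_uniq ?enum_uniq // => B1 B2.
rewrite !mem_enum; exact: bmax_inj.
Qed.

Lemma size_mus : size (mus P) = k.
Proof. by rewrite size_sort size_map -cardE. Qed.

Lemma mus_sorted : sorted ltn (mus P).
Proof. by rewrite ltn_sorted_uniq_leq mus_uniq sort_sorted //; exact: leq_total. Qed.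

Lemma mu_in l : 1 <= l <= k -> mu P l \in mus P.
Proof.
case/andP => H1 H2; rewrite /mu mem_nth // size_mus.
by case: l H1 H2.
Qed.

Lemma mu_B l : 1 <= l <= k -> exists2 B, B \in P & mu P l = bmax B.
Proof.
move/mu_in; rewrite mem_mus => /mapP [B HB E]; exists B => //.
by rewrite -mem_enum.
Qed.

Definition Bl l := pblock P (inord (mu P l)).

Lemma Bl_P l : 1 <= l <= k -> Bl l \in P /\ bmax (Bl l) = mu P l.
Proof.
move/mu_B => [B HB E]; by rewrite /Bl E pblock_bmax.
Qed.

Lemma mem_block l n : (n \in block P l) = (n \in [seq nat_of_ord x | x <- enum (Bl l)]).
Proof. by rewrite mem_sort. Qed.

Lemma mu_mono l l' : 1 <= l -> l < l' -> l' <= k -> mu P l < mu P l'.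
Proof.
move=> H1 H2 H3; rewrite /mu.
have := sorted_ltn_nth ltn_trans 0 mus_sorted.
move/(_ l.-1 l'.-1); apply; rewrite ?inE ?size_mus.
- lia.
- lia.
lia.
Qed.

Lemma k_ge2 : 2 <= k.
Proof.
have H2 : (inord 2 : 'I_r.+1) \in cover P by rewrite HPcov inE inordK.
have HB := pblock_mem H2.
have Hne : pblock P (inord 2) != [set (inord 1 : 'I_r.+1)].
  apply/negP => /eqP E; have Hm : (inord 2 : 'I_r.+1) \in pblock P (inord 2) by rewrite mem_pblock.
  rewrite E inE in Hm; move/eqP/(congr1 val): Hm; rewrite /= !inordK //; lia.
have Hs : [set pblock P (inord 2); [set (inord 1 : 'I_r.+1)]] \subset P.
  apply/subsetP => B; rewrite !inE => /orP [] /eqP -> //; exact: HP1.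
by have := subset_leq_card Hs; rewrite cards2 Hne.
Qed.

Lemma mu1 : mu P 1 = 1.
Proof.
have H1 : 1 \in mus P.
  rewrite mem_mus; apply/mapP; exists [set (inord 1 : 'I_r.+1)]; first by rewrite mem_enum HP1.
  rewrite /bmax big_set1 inordK //; lia.
have Hs := sort_sorted leq_total [seq bmax B | B <- enum P].
rewrite /mu /=; move: H1 Hs; rewrite /mus.
case E: (sort _ _) => [|a s] //= Ha Hp.
have Ha1 : a <= 1.
  move: Ha; rewrite inE => /orP [/eqP -> //|H].
  by have := allP (order_path_min leq_trans Hp) _ H.
have Ha0 : 0 < a.
  have : a \in mus P by rewrite /mus E mem_head.
  rewrite mem_mus => /mapP [B HB ->]; apply: bmax_pos; by rewrite -mem_enum.
by apply/eqP; rewrite eqn_leq Ha1.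
Qed.

Lemma block_uniq l : uniq (block P l).
Proof. by rewrite sort_uniq map_inj_uniq ?enum_uniq //; exact: val_inj. Qed.

Lemma mem_block_ord l (x : 'I_r.+1) : ((x : nat) \in block P l) = (x \in Bl l).
Proof. by rewrite mem_block mem_map ?mem_enum //; exact: val_inj. Qed.

Lemma mem_blockP l n : n \in block P l -> exists2 x : 'I_r.+1, x \in Bl l & (x : nat) = n.
Proof. by rewrite mem_block => /mapP [x Hx ->]; exists x; rewrite // -mem_enum. Qed.

Section InRange.
Variable l : nat.
Hypothesis Hl : 1 <= l <= k.

Lemma block_mu : mu P l \in block P l.
Proof.
have [HB E] := Bl_P Hl; case: (bmax_in HB) => x Hx Ex.
by rewrite -E -Ex mem_block_ord.
Qed.

Lemma block_le n : n \in block P l -> n <= mu P l.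
Proof.
have [HB E] := Bl_P Hl; case/mem_blockP => x Hx <-; rewrite -E; exact: le_bmax.
Qed.

Lemma block_pos n : n \in block P l -> 0 < n.
Proof.
have [HB E] := Bl_P Hl; case/mem_blockP => x Hx <-; exact: in_pos Hx.
Qed.

Lemma mu_r : mu P l <= r.
Proof. have [HB E] := Bl_P Hl; rewrite -E; exact: bmax_r. Qed.

Lemma block_r n : n \in block P l -> n <= r.
Proof. move=> H; apply: leq_trans (block_le H) mu_r. Qed.

Lemma block_ne : block P l != [::].
Proof. by apply/negP => /eqP E; have := block_mu; rewrite E. Qed.
End InRange.

Lemma block_disj l l' n : 1 <= l <= k -> 1 <= l' <= k -> l != l' ->
  n \in block P l -> n \notin block P l'.
Proof.
move=> Hl Hl' Hne /mem_blockP [x Hx <-]; apply/negP; rewrite mem_block_ord => Hx'.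
have E1 : Bl l = pblock P x by rewrite (def_pblock HPtriv (proj1 (Bl_P Hl)) Hx).
have E2 : Bl l' = pblock P x by rewrite (def_pblock HPtriv (proj1 (Bl_P Hl')) Hx').
have : mu P l = mu P l' by rewrite -(proj2 (Bl_P Hl)) -(proj2 (Bl_P Hl')) E1 E2.
case/andP: Hl => H1 H2; case/andP: Hl' => H1' H2'.
case: (ltngtP l l') => [H | H | H]; last by rewrite H eqxx in Hne.
  by have := mu_mono H1 H H2'; move=> Hm Em; rewrite Em ltnn in Hm.
by have := mu_mono H1' H H2; move=> Hm Em; rewrite Em ltnn in Hm.
Qed.

Lemma Bl_of B : B \in P -> exists2 l, 1 <= l <= k & Bl l = B.
Proof.
move=> HB.
have Hm : bmax B \in mus P by rewrite mem_mus map_f // mem_enum.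
exists (index (bmax B) (mus P)).+1.
  by rewrite /= -size_mus index_mem.
by rewrite /Bl /mu /= nth_index // pblock_bmax.
Qed.

Lemma block_cover n : 1 <= n <= r -> exists2 l, 1 <= l <= k & n \in block P l.
Proof.
move=> Hn.
have Hc : (inord n : 'I_r.+1) \in cover P by rewrite HPcov inE inordK //; lia.
have HB := pblock_mem Hc.
case: (Bl_of HB) => l Hl E; exists l => //.
have -> : n = (inord n : 'I_r.+1) by rewrite inordK //; lia.
by rewrite mem_block_ord E mem_pblock.
Qed.

Lemma mus_cons : mus P = 1 :: behead (mus P).
Proof.
have := mu1; rewrite /mu /=; have := k_ge2; rewrite -size_mus.
by case: (mus P) => //= a s _ ->.
Qed.
End Part.


Definition Disj (G : nat -> tree) (L : seq nat) :=
  forall l l' x, l \in L -> l' \in L -> x \in verts (G l) -> x \in verts (G l') -> l = l'.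

Section Merge.
Variables (L L' : seq nat) (a b : nat) (F : nat -> tree) (t : tree).
Hypotheses (HuL : uniq L) (HuL' : uniq L') (Ha : a \in L) (Hb : b \in L) (Hab : a != b)
  (HL' : forall l, (l \in L') = (l \in L) && (l != a)).

Local Notation F' := (upd F b t).

Lemma HbL' : b \in L'.
Proof. by rewrite HL' Hb eq_sym Hab. Qed.

Lemma M_has_fwd (Q : tree -> bool) :
  (Q (F a) -> Q t) -> (Q (F b) -> Q t) ->
  has (fun l => Q (F l)) L -> has (fun l => Q (F' l)) L'.
Proof.
move=> Hqa Hqb /hasP [l Hl Hq]; apply/hasP.
case: (eqVneq l a) => [E | Hla].
  by exists b; rewrite ?HbL' // /upd eqxx; apply: Hqa; rewrite -E.
case: (eqVneq l b) => [E | Hlb].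
  by exists b; rewrite ?HbL' // /upd eqxx; apply: Hqb; rewrite -E.
by exists l; rewrite ?HL' ?Hl ?Hla // /upd (negbTE Hlb).
Qed.

Lemma M_has_bwd (Q : tree -> bool) :
  (Q t -> Q (F a) || Q (F b)) ->
  has (fun l => Q (F' l)) L' -> has (fun l => Q (F l)) L.
Proof.
move=> Hq /hasP [l Hl]; rewrite /upd; case: (eqVneq l b) => [_ | Hlb] Hql.
  by case/orP: (Hq Hql) => H; apply/hasP; [exists a | exists b].
by apply/hasP; exists l => //; move: Hl; rewrite HL' => /andP [].
Qed.

Lemma M_inc : (forall l, l \in L -> is_inc_tree (F l)) -> is_inc_tree t ->
  forall l, l \in L' -> is_inc_tree (F' l).
Proof.
move=> H Ht l Hl; rewrite /upd; case: ifP => // _; apply: H.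
by move: Hl; rewrite HL' => /andP [].
Qed.

Lemma M_disj : (forall x, (x \in verts t) = (x \in verts (F a)) || (x \in verts (F b))) ->
  Disj F L -> Disj F' L'.
Proof.
move=> Hvt HD.
have Hor : forall l x, l \in L' -> x \in verts (F' l) ->
    exists2 o, o \in L & (x \in verts (F o)) /\ (o = l \/ (l = b /\ o = a)).
  move=> l x Hl; rewrite /upd; case: (eqVneq l b) => [-> | Hlb].
    rewrite Hvt => /orP [H | H]; first by exists a => //; split => //; right.
    by exists b => //; split => //; left.
  move=> H; exists l; last by split => //; left.
  by move: Hl; rewrite HL' => /andP [].
move=> l l' x Hl Hl' Hx Hx'.
case: (Hor _ _ Hl Hx) => o1 Ho1 [Hx1 E1].
case: (Hor _ _ Hl' Hx') => o2 Ho2 [Hx2 E2].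
have E := HD _ _ _ Ho1 Ho2 Hx1 Hx2.
have Hla : l != a by move: Hl; rewrite HL' => /andP [].
have Hla' : l' != a by move: Hl'; rewrite HL' => /andP [].
case: E1 => [E1 | [E1 E1']]; case: E2 => [E2 | [E2 E2']].
- by rewrite -E1 -E2.
- by move: Hla; rewrite -E1 E E2' eqxx.
- by move: Hla'; rewrite -E2 -E E1' eqxx.
by rewrite E1 E2.
Qed.

Lemma M_prod (R : comRingType) (g : tree -> R) (X : R) :
  g t = (X * g (F a) * g (F b))%R ->
  (\prod_(l <- L') g (F' l) = X * \prod_(l <- L) g (F l))%R.
Proof.
move=> Hg.
have Hp : perm_eq L (a :: L').
  apply: uniq_perm => //=; first by rewrite HuL' HL' Ha eqxx.
  move=> l; rewrite in_cons HL'; case: (eqVneq l a) => [-> | _] //=; by rewrite ?Ha ?andbT.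
rewrite (perm_big _ Hp) big_cons.
rewrite (bigD1_seq b HbL' HuL') (bigD1_seq b HbL' HuL') /= {1}/upd eqxx Hg.
have -> : (\prod_(i <- L' | i != b) g (F' i) = \prod_(i <- L' | i != b) g (F i))%R.
  by apply: eq_bigr => i Hi; rewrite /upd (negbTE Hi).
ring.
Qed.
End Merge.

Definition live k i := 1 :: iota i (k.+1 - i).

Lemma live_uniq k i : 2 <= i -> uniq (live k i).
Proof. by move=> Hi; rewrite /= iota_uniq mem_iota andbT; apply/negP => /andP [H _]; lia. Qed.

Lemma mem_live k i l : 2 <= i -> i <= k.+1 -> (l \in live k i) = (l == 1) || (i <= l <= k).
Proof.
move=> H1 H2; rewrite in_cons mem_iota; congr (_ || _).
apply/idP/idP => /andP [Ha Hb]; apply/andP; split => //; lia.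
Qed.

Section Constr.
Variables (r : nat) (P : {set {set 'I_r.+1}}) (c : seq nat).
Hypotheses (Hr : 2 <= r) (HP : Pi1 P) (HC : in_C P c).

Local Notation k := (nbl P).
Local Notation f := (xv r).

Record Inv (i : nat) (F : nat -> tree) (nu : nat) : Prop := {
  I0 : 2 <= i <= k;
  I1 : forall l, l \in live k i -> is_inc_tree (F l);
  I2a : forall x, (1 <= x <= r) = has (fun l => x \in verts (F l)) (live k i);
  I2b : Disj F (live k i);
  I3 : forall l, i <= l <= k -> mu P l \in verts (F l);
  I4 : nu \in verts (F 1);
  I4' : nu < mu P i;
  I5 : forall x y l, 1 <= l <= k -> x \in block P l -> y \in block P l -> x < y ->
         has (fun l' => (y \in verts (F l')) && (x \in chain (F l') y)) (live k i);
  I6 : (\prod_(l <- live k i) pprod f (F l) * f nu =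
        f 1 * \prod_(j <- iota 2 (i - 2)) f (cc c j) *
        \prod_(l <- iota 1 k) pprod f (chain_tree (block P l)))%R }.

Lemma k2 : 2 <= k. Proof. exact: k_ge2. Qed.

Lemma Inv_init : Inv 2 (fun l => chain_tree (block P l)) 1.
Proof.
have Hk := k2.
have HL : forall l, (l \in live k 2) = (1 <= l <= k).
  move=> l; rewrite mem_live //; last by lia.
  apply/idP/idP; [case/orP => [/eqP -> | /andP [H1 H2]] | move=> /andP [H1 H2]]; lia.
split.
- by rewrite Hk.
- move=> l; rewrite HL => Hl; apply: ct_inc.
  + exact: block_uniq.
  + exact: (block_ne HP Hl).
  + by apply/allP => n; apply: (block_pos HP Hl).
- move=> x; apply/idP/idP.
    move=> Hx; case: (block_cover Hr HP Hx) => l Hl Hxl.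
    by apply/hasP; exists l; rewrite ?HL.
  case/hasP => l; rewrite HL => Hl Hx.
  by rewrite (block_pos HP Hl Hx) (block_r HP Hl Hx).
- move=> l l' x; rewrite !HL => Hl Hl' Hx Hx'.
  apply/eqP; apply/negP => /negP Hne.
  by have := block_disj Hr HP Hl Hl' Hne Hx; rewrite Hx'.
- by move=> l Hl; apply: (block_mu HP); lia.
- have H1 : 1 <= 1 <= k by lia.
  by have := block_mu HP H1; rewrite (mu1 Hr HP).
- by rewrite -{1}(mu1 Hr HP); apply: (mu_mono Hr HP).
- move=> x y l Hl Hx Hy Hxy; apply/hasP; exists l; first by rewrite HL.
  rewrite /verts /= Hy /= ct_chain ?Hx ?(ltnW Hxy) //.
  by apply/allP => n; apply: (block_pos HP Hl).
- rewrite /= big_nil mulr1 mulrC.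
  by have -> : iota 1 k = 1 :: iota 2 (k.+1 - 2) by case: k Hk => // n _; rewrite subSS subn1.
Qed.

Lemma live_facts i : 2 <= i < k ->
  [/\ uniq (live k i), uniq (live k i.+1),
      forall l, (l \in live k i) = (l == 1) || (i <= l <= k),
      forall l, (l \in live k i.+1) = (l == 1) || (i < l <= k) &
      forall l, (l \in live k i.+1) = (l \in live k i) && (l != i)].
Proof.
case/andP => H1 H2.
have E1 : forall l, (l \in live k i) = (l == 1) || (i <= l <= k).
  move=> l; rewrite mem_live //; lia.
have E2 : forall l, (l \in live k i.+1) = (l == 1) || (i < l <= k).
  move=> l; rewrite mem_live //; lia.
split => //; try apply: live_uniq; try lia.
move=> l; rewrite E1 E2; case: (eqVneq l 1) => [-> | Hl1] /=; first by lia.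
case: (eqVneq l i) => [-> | Hli] /=; first by rewrite ltnn andbF.
rewrite andbT; apply/idP/idP => /andP [Ha Hc]; apply/andP; split => //; [lia | move: Hli => /eqP Hli; lia].
Qed.

Lemma step_gen i F nu b v : Inv i F nu -> i < k -> b \in live k i.+1 ->
  v \in verts (F b) -> v < mu P i ->
  let t := spl (F i) (mu P i) (F b) v in
  let F' := upd F b t in
  [/\ (forall l, l \in live k i.+1 -> is_inc_tree (F' l)),
      (forall x, (1 <= x <= r) = has (fun l => x \in verts (F' l)) (live k i.+1)),
      is_inc_tree t,
      Disj F' (live k i.+1) /\
      (forall x y l, 1 <= l <= k -> x \in block P l -> y \in block P l -> x < y ->
         has (fun l' => (y \in verts (F' l')) && (x \in chain (F' l') y)) (live k i.+1)) &
      (\prod_(l <- live k i.+1) pprod f (F' l) = f v * \prod_(l <- live k i) pprod f (F l))%R].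
Proof.
move=> HI Hik Hb Hv Hvlt t F'.
case: (HI) => Hi HI1 HI2a HI2b HI3 HI4 HI4' HI5 HI6.
have Hii : 2 <= i < k by case/andP: Hi => ->.
case: (live_facts Hii) => Hu Hu' HLi HLi1 HL'.
have Hbi : b != i by move: Hb; rewrite HL' => /andP [].
have HbL : b \in live k i by move: Hb; rewrite HL' => /andP [].
have HiL : i \in live k i by rewrite HLi leqnn; apply/orP; right; lia.
have HTi := HI1 _ HiL.
have HTb := HI1 _ HbL.
have Hmui : mu P i \in verts (F i) by apply: HI3; lia.
have Hdis : forall x, x \in verts (F i) -> x \notin verts (F b).
  move=> x Hx; apply/negP => Hx'; have := HI2b _ _ _ HiL HbL Hx Hx'.
  by move=> E; move: Hbi; rewrite E eqxx.
have Ht := S_inc HTi HTb Hmui Hv Hdis.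
have Hvt : forall x, (x \in verts t) = (x \in verts (F i)) || (x \in verts (F b)).
  by move=> x; rewrite /t /verts /= mem_cat.
have Hib : i != b by rewrite eq_sym.
split => //.
- exact: (M_inc b HL' HI1 Ht).
- move=> x; rewrite HI2a; apply/idP/idP.
    apply: (M_has_fwd HbL Hib HL' (Q := fun T => x \in verts T)).
      by move=> H; rewrite Hvt H.
    by move=> H; rewrite Hvt H orbT.
  apply: (M_has_bwd (b := b) (L := live k i) (L' := live k i.+1) HiL HbL HL' (Q := fun T => x \in verts T)).
  by rewrite Hvt.
split; first exact: (M_disj HiL HbL HL' Hvt HI2b).
  move=> x y l Hl Hx Hy Hxy; have := HI5 _ _ _ Hl Hx Hy Hxy.
  apply: (M_has_fwd HbL Hib HL' (Q := fun T => (y \in verts T) && (x \in chain T y))).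
    case/andP => H1 H2; rewrite Hvt H1 /=.
    exact: (spl_anc1 HTi HTb Hmui Hv Hdis H1 H2).
  case/andP => H1 H2; rewrite Hvt H1 orbT /=.
  exact: (spl_anc2 HTi HTb Hmui Hv Hdis H1 H2).
apply: (M_prod Hu Hu' HiL HbL Hib HL').
exact: (spl_pprod HTi HTb Hmui Hv Hvlt Hdis).
Qed.

Lemma alg1 (R : comRingType) (PL n o A C x : R) :
  (PL * n = o * A * C -> n * PL * x = o * (A * x) * C)%R.
Proof. move=> H; transitivity (PL * n * x)%R; first ring. rewrite H; ring. Qed.

Lemma alg2 (R : comRingType) (PL n o A C x : R) :
  (PL * n = o * A * C -> x * PL * n = o * (A * x) * C)%R.
Proof. move=> H; transitivity (PL * n * x)%R; first ring. rewrite H; ring. Qed.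

Lemma iota_split i : 2 <= i -> iota 2 (i.+1 - 2) = iota 2 (i - 2) ++ [:: i].
Proof.
move=> Hi; have -> : i.+1 - 2 = (i - 2) + 1 by lia.
by rewrite iotaD; congr (_ ++ _); have -> : 2 + (i - 2) = i by lia.
Qed.

Lemma ar1 i l : 2 <= i -> i < l -> l != 1.
Proof. move=> *; apply/eqP; lia. Qed.
Lemma ar2 i k0 l : i.+1 <= l <= k0 -> i <= l <= k0.
Proof. move=> /andP [H1 H2]; rewrite H2 andbT; exact: ltnW. Qed.
Lemma ar3 i k0 : 2 <= i < k0 -> 2 <= i.+1 <= k0.
Proof. move=> /andP [H1 H2]; apply/andP; split; lia. Qed.
Lemma ar4 i k0 : 2 <= i < k0 -> 2 <= i <= k0.-1.
Proof. move=> /andP [H1 H2]; apply/andP; split; lia. Qed.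
Lemma ar5 i k0 : 2 <= i < k0 -> 1 <= i <= k0.
Proof. move=> /andP [H1 H2]; apply/andP; split; lia. Qed.
Lemma ar6 i k0 : 2 <= i < k0 -> i <= i <= k0.
Proof. move=> /andP [H1 H2]; apply/andP; split; lia. Qed.
Lemma ar7 i k0 j : j \in iota i.+1 (k0 - i) -> i.+1 <= j <= k0.
Proof. rewrite mem_iota => /andP [H1 H2]; apply/andP; split; lia. Qed.
Lemma ar8 k0 i : i < k0 -> k0.+1 - i = (k0 - i).+1.
Proof. lia. Qed.

Lemma verts_spl T1 v1 T2 v2 : verts (spl T1 v1 T2 v2) = verts T1 ++ verts T2.
Proof. by []. Qed.

Lemma Inv_step i F nu : i < k -> Inv i F nu ->
  Inv i.+1 (stage P c (F, nu) i).1 (stage P c (F, nu) i).2.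
Proof.
move=> Hik HI.
case: (HI) => Hi HI1 HI2a HI2b HI3 HI4 HI4' HI5 HI6.
have Hii : 2 <= i < k by case/andP: Hi => ->.
have Hi2 : 2 <= i by case/andP: Hii.
case: (live_facts Hii) => Hu Hu' HLi HLi1 HL'.
have Hci : 1 <= cc c i <= mu P i by apply: (proj2 HC); apply: ar4.
have Hmur : mu P i <= r by apply: (mu_r HP); apply: ar5.
have Hmono : mu P i < mu P i.+1 by apply: (mu_mono Hr HP) => //; case/andP: Hii => H1 _; apply: leq_trans H1.
have Hmui : mu P i \in verts (F i) by apply: HI3; apply: ar6.
rewrite /stage.
case: ifP => Hcond /=.
- have H1 : 1 \in live k i.+1 by rewrite HLi1 eqxx.
  have [G1 G2 G3 [G4 G5] G6] := step_gen HI Hik H1 HI4 HI4'.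
  split => //.
  + exact: ar3.
  + move=> l Hl; rewrite /upd ifN_eq; last by apply: (ar1 Hi2); case/andP: Hl.
    by apply: HI3; apply: ar2.
  + by rewrite /upd eqxx verts_spl mem_cat orbC.
  + by apply: leq_ltn_trans Hmono; case/andP: Hci.
  + rewrite G6 (iota_split Hi2) big_cat big_seq1.
    exact: alg1 HI6.
- have Hn1 : cc c i \notin verts (F 1) by apply/negP => H; rewrite H in Hcond.
  have Hni : cc c i \notin verts (F i) by apply/negP => H; rewrite H orbT in Hcond.
  have Hhas : has (fun j => cc c i \in verts (F j)) (iota i.+1 (k - i)).
    have : 1 <= cc c i <= r by case/andP: Hci => Ha Hb; rewrite Ha (leq_trans Hb Hmur).
    rewrite HI2a /live /= (negbTE Hn1) /= (ar8 Hik) /=.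
    by rewrite (negbTE Hni).
  set j := head 0 _.
  have [Hj Hcj] : j \in iota i.+1 (k - i) /\ cc c i \in verts (F j).
    move: Hhas; rewrite has_filter /j.
    case E: [seq _ <- _ | _] => [|a s] // _ /=.
    have : a \in [seq j <- iota i.+1 (k - i) | cc c i \in verts (F j)] by rewrite E mem_head.
    by rewrite mem_filter => /andP [].
  have Hj' := ar7 Hj.
  have HjL : j \in live k i.+1 by rewrite HLi1 Hj' orbT.
  have Hclt : cc c i < mu P i.
    rewrite ltn_neqAle; case/andP: Hci => _ ->; rewrite andbT.
    by apply/negP => /eqP E; move: Hni; rewrite E Hmui.
  have [G1 G2 G3 [G4 G5] G6] := step_gen HI Hik HjL Hcj Hclt.
  split => //.
  + exact: ar3.
  + move=> l Hl; rewrite /upd; case: ifP => [/eqP E | _].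
      by rewrite verts_spl mem_cat E (HI3 j) ?orbT // ar2.
    by apply: HI3; apply: ar2.
  + by rewrite /upd ifN_eq // eq_sym; apply: (ar1 Hi2); case/andP: Hj'.
  + exact: ltn_trans HI4' Hmono.
  + rewrite G6 (iota_split Hi2) big_cat big_seq1.
    exact: alg2 HI6.
Qed.
End Constr.


Lemma xv_neq0 r i : xv r i != 0%R.
Proof.
rewrite /xv tofrac_eq0; apply/eqP => H.
have := mcoeffXU rat (inord i : 'I_r.+1) (inord i).
by rewrite H mcoeff0 eqxx => /eqP; rewrite eq_sym oner_eq0.
Qed.

Lemma alg3 (K : fieldType) (Pc Bm o C : K) : Bm != 0%R ->
  (o * Pc * C = Pc / Bm * (o * Bm * C))%R.
Proof. move=> H; field. exact: H. Qed.

Lemma uniq_flatten_map (g : nat -> seq nat) (s : seq nat) :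
  uniq s -> (forall l, l \in s -> uniq (g l)) ->
  (forall l l' x, l \in s -> l' \in s -> x \in g l -> x \in g l' -> l = l') ->
  uniq (flatten [seq g l | l <- s]).
Proof.
elim: s => //= a s IH /andP [Has Hu] Hg Hd.
rewrite cat_uniq Hg ?mem_head //= IH //; last first.
- by move=> l l' x Hl Hl' Hx Hx'; apply: (Hd l l' x); rewrite ?in_cons ?Hl ?Hl' ?orbT.
- by move=> l Hl; apply: Hg; rewrite in_cons Hl orbT.
rewrite andbT; apply/hasPn => x /flattenP [t /mapP [l Hl ->] Hx]; apply/negP => Hx'.
have Hl2 : l \in a :: s by rewrite in_cons Hl orbT.
have E := Hd a l x (mem_head _ _) Hl2 Hx' Hx.
by move: Has; rewrite E Hl.
Qed.

Section Main.
Variables (r : nat) (P : {set {set 'I_r.+1}}) (c : seq nat).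
Hypotheses (Hr : 2 <= r) (HP : Pi1 P) (HC : in_C P c).
Local Notation k := (nbl P).
Local Notation f := (xv r).

Definition st0 : (nat -> tree) * nat := ((fun l => chain_tree (block P l)), 1%N).

Lemma Inv_fold n : n <= k - 2 ->
  Inv P c (2 + n) (foldl (stage P c) st0 (iota 2 n)).1 (foldl (stage P c) st0 (iota 2 n)).2.
Proof.
elim: n => [_ | n IH Hn]; first exact: (Inv_init c Hr HP).
have -> : iota 2 n.+1 = iota 2 n ++ [:: 2 + n] by rewrite -[n.+1]addn1 iotaD.
rewrite foldl_cat /=.
have := IH (ltnW Hn).
case: (foldl (stage P c) st0 (iota 2 n)) => F nu /= HI.
rewrite addnS; apply: (Inv_step Hr HP HC) => //.
have := k_ge2 Hr HP; lia.
Qed.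

Lemma prod_c : (\prod_(j <- iota 2 (k - 2)) f (cc c j) = \prod_(x <- c) f x)%R.
Proof.
have -> : iota 2 (k - 2) = [seq 2 + j | j <- iota 0 (k - 2)] by rewrite -iotaDl.
rewrite big_map /cc.
rewrite -{2}(mkseq_nth 0 c) /mkseq big_map (proj1 HC).
by apply: eq_bigr => j _; rewrite addKn.
Qed.

Lemma prod_mus : (\prod_(l <- iota 1 k) f (mu P l) = \prod_(m <- mus P) f m)%R.
Proof.
have -> : iota 1 k = [seq 1 + j | j <- iota 0 k] by rewrite -iotaDl.
rewrite big_map /mu.
rewrite -{2}(mkseq_nth 0 (mus P)) /mkseq big_map (size_mus P).
by apply: eq_bigr => j _; rewrite add1n.
Qed.

Lemma prod_all : (\prod_(1 <= i < r.+1) f i =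
  \prod_(l <- iota 1 k) (f (mu P l) * pprod f (chain_tree (block P l))))%R.
Proof.
have E : perm_eq (index_iota 1 r.+1) (flatten [seq block P l | l <- iota 1 k]).
  apply: uniq_perm.
  - by rewrite /index_iota iota_uniq.
  - apply: uniq_flatten_map; first exact: iota_uniq.
      by move=> l _; apply: block_uniq.
    move=> l l' x; rewrite !mem_iota => Hl Hl' Hx Hx'.
    apply/eqP; apply/negP => /negP Hne.
    have H1 : 1 <= l <= k by move: Hl; clear; lia.
    have H2 : 1 <= l' <= k by move: Hl'; clear; lia.
    by have := block_disj Hr HP H1 H2 Hne Hx; rewrite Hx'.
  move=> x; rewrite mem_index_iota; apply/idP/idP.
    move=> Hx; have Hx' : 1 <= x <= r by move: Hx; clear; lia.
    case: (block_cover Hr HP Hx') => l Hl Hxl.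
    apply/flattenP; exists (block P l) => //; apply/mapP; exists l => //.
    by rewrite mem_iota; move: Hl; clear; lia.
  case/flattenP => t /mapP [l Hl ->] Hx.
  have Hl' : 1 <= l <= k by move: Hl; rewrite mem_iota; clear; lia.
  have := block_pos HP Hl' Hx; have := block_r HP Hl' Hx; clear; lia.
rewrite (perm_big _ E) big_flatten big_map.
apply: eq_big_seq => l Hl.
have Hl' : 1 <= l <= k by move: Hl; rewrite mem_iota; clear; lia.
rewrite ct_pprod.
- by [].
- exact: block_uniq.
- exact: (block_ne HP Hl').
- by apply/allP => n; apply: (block_pos HP Hl').
- exact: (block_mu HP Hl').
- by move=> x; apply: (block_le HP Hl').
Qed.


Lemma alg4 (R : comRingType) (p1 pk n X : R) : (p1 * pk * n = X -> n * pk * p1 = X)%R.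
Proof. move=> <-; ring. Qed.

Theorem main_thm : in_E P (psi P c) /\ kappa r (psi P c) = omega P c.
Proof.
have Hk := k_ge2 Hr HP.
have HI := Inv_fold (leqnn (k - 2)).
rewrite (subnKC Hk) /st0 in HI.
rewrite /psi.
set st := foldl _ _ _ in HI *.
case: HI => HI0 HI1 HI2a HI2b HI3 HI4 HI4' HI5 HI6.
have EL : live k k = [:: 1; k] by rewrite /live subSnn.
have Hk1 : k != 1 by apply/eqP => E; rewrite E in Hk.
have HkL : k \in live k k by rewrite EL !inE eqxx orbT.
have H1L : 1 \in live k k by rewrite EL !inE eqxx.
have HTk := HI1 _ HkL.
have HT1 := HI1 _ H1L.
have Hmuk : mu P k \in verts (st.1 k) by apply: HI3; rewrite leqnn.
have Hdis : forall x, x \in verts (st.1 k) -> x \notin verts (st.1 1).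
  move=> x Hx; apply/negP => Hx'; have := HI2b _ _ _ HkL H1L Hx Hx'.
  by move=> E; rewrite E eqxx in Hk1.
have Ht := S_inc HTk HT1 Hmuk HI4 Hdis.
split.
- split => //.
  + by move=> x; rewrite verts_spl mem_cat HI2a EL /= orbF orbC.
  + move=> B HB x y Hx Hy Hxy; case: (Bl_of HP HB) => l Hl E.
    have Hx' : (x : nat) \in block P l by rewrite mem_block_ord E.
    have Hy' : (y : nat) \in block P l by rewrite mem_block_ord E.
    have := HI5 _ _ _ Hl Hx' Hy' Hxy; rewrite EL /= orbF.
    case/orP => /andP [H1 H2]; rewrite /is_ancestor.
    * exact: (spl_anc2 HTk HT1 Hmuk HI4 Hdis H1 H2).
    * exact: (spl_anc1 HTk HT1 Hmuk HI4 Hdis H1 H2).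
rewrite (kappa_pprod r Ht) (spl_pprod HTk HT1 Hmuk HI4 HI4' Hdis).
move: HI6; rewrite EL big_cons big_seq1 prod_c => HI6.
rewrite /omega prod_all big_split /= prod_mus (mus_cons Hr HP) big_cons.
rewrite (alg4 HI6).
have -> : behead (1%N :: behead (mus P)) = behead (mus P) by [].
apply: alg3.
by rewrite prodf_seq_neq0; apply/allP => m _; rewrite xv_neq0.
Qed.
End Main.


Unset Implicit Arguments.

Theorem proposition2p7 (r : nat) (P : {set {set 'I_r.+1}}) (c : seq nat) :
  2 <= r -> Pi1 P -> in_C P c ->
  in_E P (psi P c) /\ kappa r (psi P c) = omega P c.
Proof.
move=> Hr HP HC; exact: (main_thm Hr HP HC).
Qed.
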